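(* Let $0<q<1$ and let $A_q(t)=\sum_{n=0}^{\infty}A_{n,q}\dfrac{t^n}{[n]_q!}$ be a power series, analytic at $t=0$, with $A_q(0)=A_{0,q}\neq 0$. Define the $q$-Appell polynomials $A_{n,q}(x)$ by \[ A_q(t)\,e_q(tx)=\sum_{n=0}^{\infty}A_{n,q}(x)\frac{t^n}{[n]_q!}, \] and define the numbers $\alpha_n$ by the expansion \[ t\,\frac{D_{q,t}A_q(t)}{A_q(qt)}=\sum_{n=0}^{\infty}\alpha_n\frac{t^n}{[n]_q!}. \] Then for every integer $n\ge 1$, \begin{align*} A_{n,q}(qx)&=\frac{1}{[n]_q}\sum_{k=0}^{n}\begin{bmatrix}n\\k\end{bmatrix}_q\alpha_{n-k}\,q^{k}A_{k,q}(x)+x\,q^{n}A_{n-1,q}(x)\\ &=\frac{1}{[n]_q}\alpha_0 q^{n}A_{n,q}(x)+q^{n}\left(x+\alpha_1q^{-1}\right)A_{n-1,q}(x)+\frac{1}{[n]_q}\sum_{k=0}^{n-2}\begin{bmatrix}n\\k\end{bmatrix}_q\alpha_{n-k}\,q^{k}A_{k,q}(x). \end{align*}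
   Context: $[n]_q=\frac{1-q^n}{1-q}$, $[0]_q!=1$, $[n]_q!=[n]_q[n-1]_q\cdots[1]_q$, and $\begin{bmatrix}n\\k\end{bmatrix}_q=\frac{[n]_q!}{[k]_q![n-k]_q!}$. The $q$-exponential is $e_q(t)=\sum_{n=0}^\infty \frac{t^n}{[n]_q!}$. The $q$-derivative is $D_{q,x}f(x)=\frac{f(qx)-f(x)}{(q-1)x}$ (for $x\neq0$; for power series/polynomials it acts by $D_{q,x}x^n=[n]_qx^{n-1}$), and $D_{q,t}$ is the same operator in the variable $t$. *)

(* Defs.v *)
From mathcomp Require Import all_boot all_order all_algebra.
From mathcomp Require Import reals.
Set Implicit Arguments. Unset Strict Implicit. Unset Printing Implicit Defensive.
Import Order.TTheory GRing.Theory Num.Theory.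
Local Open Scope ring_scope.

Section QDefs.
Variable R : realType.
Implicit Types (q x : R) (n k : nat).

Definition qnum q n : R := (1 - q ^+ n) / (1 - q).
Definition qfact q n : R := \prod_(0 <= i < n) qnum q i.+1.
Definition qbinom q n k : R := qfact q n / (qfact q k * qfact q (n - k)).

(* Formal power series in t, represented by their ordinary coefficient
   sequences: f represents \sum_n f n t^n. *)
Definition fps := nat -> R.
Definition fps_mul (f g : fps) : fps :=
  fun n => \sum_(0 <= k < n.+1) f k * g (n - k)%N.
Definition fps_mulX (f : fps) : fps := fun n => if n is m.+1 then f m else 0.
Definition fps_qderiv q (f : fps) : fps := fun n => qnum q n.+1 * f n.+1.
Definition fps_dil q (f : fps) : fps := fun n => q ^+ n * f n.
Definition qegf q (c : nat -> R) : fps := fun n => c n / qfact q n.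
Definition qexp_tx q x : fps := qegf q (fun n => x ^+ n).

(* q-Appell polynomials A_{n,q}(x): coefficient of t^n/[n]_q! in
   A_q(t) e_q(t x), where A_q(t) = \sum_n a_n t^n/[n]_q! *)
Definition qAppell q (a : nat -> R) n x : R :=
  qfact q n * fps_mul (qegf q a) (qexp_tx q x) n.

End QDefs.

(* Main.v *)
Require Import Defs.
From mathcomp Require Import all_boot all_order all_algebra.
From mathcomp Require Import reals.
From mathcomp Require Import ring lra.
Import Order.TTheory GRing.Theory Num.Theory.
Local Open Scope ring_scope.

Section Aux.
Variable R : realType.
Variables (q : R).
Hypotheses (hq0 : 0 < q) (hq1 : q < 1).

Lemma qnum_gt0 i : 0 < qnum q i.+1.
Proof.
rewrite /qnum divr_gt0 // ?subr_gt0 // exprn_ilt1 ?ltW //.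
Qed.

Lemma qfact_neq0 n : qfact q n != 0.
Proof.
rewrite /qfact; rewrite prodf_seq_neq0; apply/allP => i _ /=.
by rewrite gt_eqF // qnum_gt0.
Qed.

Lemma qfactS n : qfact q n.+1 = qfact q n * qnum q n.+1.
Proof. by rewrite /qfact big_nat_recr. Qed.

Lemma qnum0 : qnum q 0 = 0.
Proof. by rewrite /qnum expr0 subrr mul0r. Qed.

Lemma qnum_split n j : (j <= n)%N -> qnum q n = qnum q j + q ^+ j * qnum q (n - j).
Proof.
move=> hj; rewrite /qnum.
have h : q ^+ n = q ^+ j * q ^+ (n - j) by rewrite -exprD subnKC.
rewrite h; have : 1 - q != 0 by rewrite subr_eq0 eq_sym lt_eqF.
move=> hq; by field.
Qed.

Definition P (N : nat) (f : fps R) : {poly R} := \poly_(i < N) f i.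

Lemma mulE (f g : fps R) N k : (k < N)%N -> fps_mul f g k = (P N f * P N g)`_k.
Proof.
move=> hk; rewrite coefM /fps_mul big_mkord; apply: eq_bigr => [[j hj]] _ /=.
rewrite /P !coef_poly (leq_ltn_trans _ hk) ?(leq_ltn_trans _ hk) ?leq_subr //.
all: by rewrite -ltnS.
Qed.

Lemma mulA (f g h : fps R) n : fps_mul (fps_mul f g) h n = fps_mul f (fps_mul g h) n.
Proof.
rewrite (@mulE _ _ n.+1 n (ltnSn n)) (@mulE f _ n.+1 n (ltnSn n)).
have -> : (P n.+1 (fps_mul f g) * P n.+1 h)`_n = (P n.+1 f * P n.+1 g * P n.+1 h)`_n.
  rewrite !coefM; apply: eq_bigr => [[j hj]] _ /=.
  by rewrite {1}/P coef_poly hj (@mulE _ _ n.+1 j hj).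
have -> : (P n.+1 f * P n.+1 (fps_mul g h))`_n = (P n.+1 f * (P n.+1 g * P n.+1 h))`_n.
  rewrite !coefM; apply: eq_bigr => [[j hj]] _ /=.
  have hj' : (n - j < n.+1)%N by rewrite ltnS leq_subr.
  by congr (_ * _); rewrite -(@mulE g h n.+1 _ hj') /P coef_poly hj'.
by rewrite mulrA.
Qed.

Lemma mulC (f g : fps R) n : fps_mul f g n = fps_mul g f n.
Proof. by rewrite !(@mulE _ _ n.+1 n (ltnSn n)) mulrC. Qed.

Lemma mul_dil (f g : fps R) n :
  fps_mul (fps_dil q f) (fps_dil q g) n = q ^+ n * fps_mul f g n.
Proof.
rewrite /fps_mul mulr_sumr; apply: eq_big_nat => j /andP[_ hj].
by rewrite /fps_dil mulrACA -exprD subnKC.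
Qed.

Lemma mul_ext (f f' g g' : fps R) n :
  (forall j, (j <= n)%N -> f j = f' j) -> (forall j, (j <= n)%N -> g j = g' j) ->
  fps_mul f g n = fps_mul f' g' n.
Proof.
move=> hf hg; rewrite /fps_mul; apply: eq_big_nat => j /andP[_ hj].
by rewrite hf ?hg // leq_subr.
Qed.

End Aux.

Section Main.
Variable R : realType.
Variables (q : R) (a alpha : nat -> R).
Hypotheses (hq0 : 0 < q) (hq1 : q < 1).
Hypothesis (halpha : forall m : nat,
     fps_mul (qegf q alpha) (fps_dil q (qegf q a)) m
     = fps_mulX (fps_qderiv q (qegf q a)) m).

Lemma rel m : fps_mul (qegf q alpha) (fps_dil q (qegf q a)) m = qnum q m * qegf q a m.
Proof. by rewrite halpha; case: m => [|m] /=; rewrite ?qnum0 ?mul0r. Qed.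

Lemma qnum_neq0 i : qnum q i.+1 != 0.
Proof. by rewrite gt_eqF // qnum_gt0. Qed.

Lemma key n x :
  let b := qegf q a in let c := qegf q alpha in let E := qexp_tx q x in
  let BE := fps_mul b E in
  qnum q n.+1 * fps_mul b (fps_dil q E) n.+1
  = fps_mul (fps_dil q BE) c n.+1 + x * q ^+ n.+1 * BE n.
Proof.
move=> b c E BE.
have e1 : qnum q n.+1 * fps_mul b (fps_dil q E) n.+1 =
   fps_mul (fun j => qnum q j * b j) (fps_dil q E) n.+1
   + q ^+ n.+1 * \sum_(0 <= j < n.+2) b j * (qnum q (n.+1 - j)%N * E (n.+1 - j)%N).
  rewrite /fps_mul !mulr_sumr -big_split; apply: eq_big_nat => j /andP[_ hj].
  have hqn : q ^+ n.+1 = q ^+ j * q ^+ (n.+1 - j)%N by rewrite -exprD subnKC.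
  rewrite (@qnum_split R q hq1 n.+1 j hj) hqn /fps_dil /=; ring.
have e2 : \sum_(0 <= j < n.+2) b j * (qnum q (n.+1 - j)%N * E (n.+1 - j)%N) = x * BE n.
  rewrite big_nat_recr //= subnn qnum0 mul0r mulr0 addr0 /BE /fps_mul mulr_sumr.
  apply: eq_big_nat => j /andP[_ hj]; rewrite subSn // /E /qexp_tx /qegf qfactS.
  have h1 := @qfact_neq0 R q hq0 hq1 (n - j)%N; have h2 := qnum_neq0 (n - j).
  rewrite /= exprS; field; by rewrite h1 h2.
have e3 : fps_mul (fun j => qnum q j * b j) (fps_dil q E) n.+1
     = fps_mul (fps_dil q BE) c n.+1.
  rewrite (@mul_ext R _ (fps_mul c (fps_dil q b)) (fps_dil q E) (fps_dil q E) n.+1);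
    [|by move=> j _; rewrite rel|by []].
  rewrite mulA mulC; apply: mul_ext => // j _.
  by rewrite mul_dil.
rewrite e1 e2 e3; congr (_ + _); ring.
Qed.

End Main.

Theorem theorem1 (R : realType) (q : R) (a alpha : nat -> R)
  (hq0 : 0 < q) (hq1 : q < 1) (ha0 : a 0%N != 0)
  (halpha : forall m : nat,
     fps_mul (qegf q alpha) (fps_dil q (qegf q a)) m
     = fps_mulX (fps_qderiv q (qegf q a)) m) :
  forall (n : nat) (x : R), (1 <= n)%N ->
    qAppell q a n (q * x)
    = (qnum q n)^-1 * \sum_(0 <= k < n.+1)
          qbinom q n k * alpha (n - k)%N * q ^+ k * qAppell q a k x
      + x * q ^+ n * qAppell q a n.-1 x
  /\
    (qnum q n)^-1 * \sum_(0 <= k < n.+1)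
          qbinom q n k * alpha (n - k)%N * q ^+ k * qAppell q a k x
      + x * q ^+ n * qAppell q a n.-1 x
    = (qnum q n)^-1 * alpha 0%N * q ^+ n * qAppell q a n x
      + q ^+ n * (x + alpha 1%N * q^-1) * qAppell q a n.-1 x
      + (qnum q n)^-1 * \sum_(0 <= k < n.-1)
          qbinom q n k * alpha (n - k)%N * q ^+ k * qAppell q a k x.
Proof.
move=> n x; case: n => [|n] // _.
have hK := @key R q a alpha hq0 hq1 halpha n x; simpl in hK.
have hqf := @qfact_neq0 R q hq0 hq1.
have hqn := @qnum_neq0 R q hq0 hq1 n.
have hq : q != 0 by rewrite gt_eqF.
have hA : forall k, qAppell q a k x = qfact q k * fps_mul (qegf q a) (qexp_tx q x) k.
  by [].
have hAq : qAppell q a n.+1 (q * x) =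
    qfact q n.+1 * fps_mul (qegf q a) (fps_dil q (qexp_tx q x)) n.+1.
  rewrite /qAppell; congr (_ * _); apply: mul_ext => // j _.
  by rewrite /qexp_tx /qegf /fps_dil exprMn mulrA.
have hS : \sum_(0 <= k < n.+2)
          qbinom q n.+1 k * alpha (n.+1 - k)%N * q ^+ k * qAppell q a k x
   = qfact q n.+1 * fps_mul (fps_dil q (fps_mul (qegf q a) (qexp_tx q x)))
                     (qegf q alpha) n.+1.
  set BE := fps_mul (qegf q a) (qexp_tx q x).
  rewrite /fps_mul mulr_sumr; apply: eq_big_nat => k /andP[_ hk].
  rewrite hA -/BE /qbinom /fps_dil /qegf.
  have h1 := hqf k; have h2 := hqf (n.+1 - k)%N.
  field; by rewrite h1 h2.
split.
  rewrite hAq hS hA /= qfactS.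
  set F := fps_mul _ (fps_dil _ _) _ in hK *.
  set G := fps_mul (fps_dil _ _) _ _ in hK *.
  have -> : G = qnum q n.+1 * F - x * q ^+ n.+1 * fps_mul (qegf q a) (qexp_tx q x) n
    by rewrite hK; ring.
  field; by rewrite hqn.
rewrite big_nat_recr // big_nat_recr //= subSnn subnn.
have qb1 : qbinom q n.+1 n.+1 = 1.
  have qf0 : qfact q 0 = 1 by rewrite /qfact big_geq.
  rewrite /qbinom subnn qf0 mulr1 divff //.
have qb2 : qbinom q n.+1 n = qnum q n.+1.
  rewrite /qbinom subSnn qfactS /qfact (big_nat1) /qnum expr1.
  have h1 := hqf n; rewrite -/(qfact q n).
  have h3 : 1 - q != 0 by rewrite subr_eq0 eq_sym lt_eqF.
  field; by rewrite h1 h3.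
rewrite qb1 qb2 !exprS.
field; by rewrite hqn hq.
Qed.
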